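(* Let $C$ be a cycle of even length. Then $S(C)$ is planar.
   Context: For a graph $G$, the great shadow $S(G)$ is the graph obtained from $G$ by adding, for each vertex $v$ of $G$, a new vertex $v'$ (the shadow vertex of $v$) and making $v'$ adjacent to $v$ and to every neighbor of $v$ in $G$; no other edges are added. *)

(* Defs.v *)
From HB Require Import structures.
From mathcomp Require Import all_boot all_order all_algebra.
From mathcomp Require Import boolp classical_sets reals topology normedtype.
From mathcomp Require Import Rstruct Rstruct_topology.
From Stdlib Require Rdefinitions.

Set Implicit Arguments.
Unset Strict Implicit.
Unset Printing Implicit Defensive.

Import Order.TTheory GRing.Theory Num.Theory.

Definition simple_graph (V : finType) (adj : rel V) : Prop :=
  symmetric adj /\ irreflexive adj.

Definition cycle_adj (n : nat) : rel 'I_n :=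
  fun i j => (i != j) && ((j == (i.+1 %% n) :> nat) || (i == (j.+1 %% n) :> nat)).

Definition is_cycle_of_length (V : finType) (adj : rel V) (n : nat) : Prop :=
  (3 <= n)%N /\
  exists f : 'I_n -> V, bijective f /\ forall i j, adj (f i) (f j) = cycle_adj i j.

(* The great shadow S(G): vertices are inl v (original) and inr v (shadow v');
   v' is adjacent to v and to every neighbour of v in G; no other new edges. *)
Definition great_shadow (V : finType) (adj : rel V) : rel (V + V) :=
  fun x y =>
    match x, y with
    | inl u, inl v => adj u v
    | inl u, inr v => (u == v) || adj v u
    | inr u, inl v => (u == v) || adj u v
    | inr _, inr _ => false
    end.

Definition plane := (Rdefinitions.R * Rdefinitions.R)%type.

Local Open Scope ring_scope.

Definition planar (V : finType) (adj : rel V) : Prop :=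
  exists (pos : V -> plane) (arc : V -> V -> Rdefinitions.R -> plane),
    injective pos /\
    forall u v, adj u v ->
      [/\ {within `[0, 1], continuous (arc u v)}%classic,
          (forall s t : Rdefinitions.R, 0 <= s <= 1 -> 0 <= t <= 1 ->
              arc u v s = arc u v t -> s = t),
          arc u v 0 = pos u /\ arc u v 1 = pos v,
          (forall (t : Rdefinitions.R) w, 0 < t < 1 -> arc u v t <> pos w) &
          (forall x y, adj x y -> [set u; v] != [set x; y] ->
             forall s t : Rdefinitions.R, 0 < s < 1 -> 0 < t < 1 ->
               arc u v s <> arc x y t)].

(* Main.v *)
Require Import Defs.
From mathcomp Require Import all_boot all_order all_algebra.
From mathcomp Require Import boolp classical_sets reals topology normedtype trigo Rstruct Rstruct_topology.
From mathcomp Require Import ring lra zify.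
Import Order.TTheory GRing.Theory Num.Theory.
Local Open Scope ring_scope.
Local Notation R := Rdefinitions.R.

Definition P (r th : R) : plane := (r * cos th, r * sin th).

Lemma P_cont (r th : R -> R) : continuous r -> continuous th ->
  continuous (fun t => P (r t) (th t)).
Proof.
move=> cr cth x; rewrite /P.
apply: (@cvg_pair _ _ _ _ (nbhs (r x * cos (th x))) (nbhs (r x * sin (th x)))) => /=.
- apply: cvgM; first exact: cr.
  exact: (continuous_comp (cth x) (@continuous_cos R _)).
- apply: cvgM; first exact: cr.
  exact: (continuous_comp (cth x) (@continuous_sin R _)).
Qed.

Lemma affine_cont (a b : R) : continuous (fun t : R => a + t * b).
Proof.
move=> x.
have h1 : ((fun t : R => t * b) @ x --> x * b)%classic.
  by apply: cvgM; [exact: cvg_id | exact: cvg_cst].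
have h0 : ((fun t : R => a) @ x --> a)%classic by exact: cvg_cst.
have h := @cvgD R R^o R (nbhs x) _ _ _ _ _ h0 h1. exact: h.
Qed.

Lemma affine_cont2 (a c d : R) : continuous (fun t : R => a * (c + t * d)).
Proof.
have -> : (fun t : R => a * (c + t * d)) = (fun t => a * c + t * (a * d)).
  by apply: funext => t; ring.
exact: affine_cont.
Qed.

Lemma cos_per (k : int) (x : R) : cos (x + k%:~R * (pi *+ 2)) = cos x.
Proof.
case: k => m.
  by rewrite -[(Posz m)%:~R]/(m%:R) mulr_natl (periodicn (@cosD2pi R)).
rewrite NegzE intrN -[(Posz m.+1)%:~R]/(m.+1%:R) mulNr mulr_natl.
by rewrite -[in RHS](subrK ((pi *+ 2) *+ m.+1) x) (periodicn (@cosD2pi R)).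
Qed.

Lemma sin_per (k : int) (x : R) : sin (x + k%:~R * (pi *+ 2)) = sin x.
Proof.
case: k => m.
  by rewrite -[(Posz m)%:~R]/(m%:R) mulr_natl (periodicn (@sinD2pi R)).
rewrite NegzE intrN -[(Posz m.+1)%:~R]/(m.+1%:R) mulNr mulr_natl.
by rewrite -[in RHS](subrK ((pi *+ 2) *+ m.+1) x) (periodicn (@sinD2pi R)).
Qed.

Lemma P_per (k : int) r th : P r (th + k%:~R * (pi *+ 2)) = P r th.
Proof. by rewrite /P cos_per sin_per. Qed.

Lemma cos_eq1_0 (e : R) : 0 <= e < pi *+ 2 -> cos e = 1 -> e = 0.
Proof.
move=> /andP[e0 e2] ce.
have pi0 := @pi_gt0 R.
have cinj := @cos_inj R.
case: (lerP e pi) => hep.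
  apply: cinj; rewrite ?in_itv /= ?e0 ?hep ?lexx ?ltW // cos0 //.
have h : cos (pi *+ 2 - e) = 1.
  by rewrite addrC (@cosD2pi R) cosN.
have : pi *+ 2 - e = 0.
  apply: cinj; rewrite ?in_itv /= ?cos0 //.
  - apply/andP; split; rewrite mulr2n; lra.
  - by rewrite lexx ltW.
rewrite mulr2n => H; lra.
Qed.

Lemma cos_eq1 (d : R) : cos d = 1 -> exists k : int, d = k%:~R * (pi *+ 2).
Proof.
move=> cd.
have T0 : 0 < pi *+ 2 :> R by rewrite mulr2n; have := @pi_gt0 R; lra.
pose k := Num.floor (d / (pi *+ 2)).
exists k.
have /andP[h1 h2] := Num.Theory.floor_itv (d / (pi *+ 2)).
rewrite -/k in h1 h2.
have e1 : k%:~R * (pi *+ 2) <= d.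
  by rewrite -ler_pdivlMr.
have e2 : d < k%:~R * (pi *+ 2) + pi *+ 2.
  by rewrite -[X in _ < _ + X]mul1r -mulrDl -ltr_pdivrMr // -[1]/(1%:~R) -intrD.
suff : d - k%:~R * (pi *+ 2) = 0 by move=> H; lra.
apply: cos_eq1_0; first by apply/andP; split; lra.
by rewrite -mulNr -intrN cos_per.
Qed.

Lemma P_inj (R1 R2 th1 th2 : R) : 0 < R1 -> 0 < R2 -> P R1 th1 = P R2 th2 ->
  R1 = R2 /\ exists k : int, th1 - th2 = k%:~R * (pi *+ 2).
Proof.
move=> r1 r2 [e1 e2].
have sq : R1 ^+ 2 = R2 ^+ 2.
  have h1 := cos2Dsin2 th1; have h2 := cos2Dsin2 th2.
  have -> : R1 ^+ 2 = (R1 * cos th1) ^+ 2 + (R1 * sin th1) ^+ 2.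
    by rewrite !exprMn -mulrDr h1 mulr1.
  have -> : R2 ^+ 2 = (R2 * cos th2) ^+ 2 + (R2 * sin th2) ^+ 2.
    by rewrite !exprMn -mulrDr h2 mulr1.
  by rewrite e1 e2.
have RR : R1 = R2 by nra.
subst R2; split => //.
have r1n : R1 != 0 by rewrite gt_eqF.
have c : cos th1 = cos th2 by apply: (mulfI r1n).
have s : sin th1 = sin th2 by apply: (mulfI r1n).
apply: cos_eq1.
by rewrite cosB -{1}c -{1}s -!expr2 cos2Dsin2.
Qed.

Lemma int_same (l l' c N : int) : 0 <= l < N -> 0 <= l' < N -> l - l' = c * N -> l = l'.
Proof.
move=> /andP[h1 h2] /andP[h3 h4] e.
have [c0|c0] : (c <= 0 \/ 0 < c)%R by lia.
  have [c1|c1] : (c = 0 \/ c <= -1)%R by lia.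
    by subst c; lia.
  nia.
nia.
Qed.

Lemma pl1 (p : int) : p%:~R + 1 = (p + 1)%:~R :> R.
Proof. by rewrite intrD. Qed.

Lemma unit_int (p q : int) (x : R) :
  p%:~R < x < p%:~R + 1 -> q%:~R < x < q%:~R + 1 -> p = q.
Proof.
move=> /andP[a1 a2] /andP[b1 b2].
have h1 : p%:~R < (q + 1)%:~R :> R by rewrite -pl1; lra.
have h2 : q%:~R < (p + 1)%:~R :> R by rewrite -pl1; lra.
rewrite ltr_int in h1; rewrite ltr_int in h2; lia.
Qed.

Lemma no_int_inside (p q : int) : ((p%:~R : R) < (q%:~R : R) < (p%:~R : R) + 1) -> False.
Proof.
move=> /andP[h1 h2]; rewrite pl1 in h2; rewrite ltr_int in h1; rewrite ltr_int in h2; lia.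
Qed.

Lemma kn_small (k : int) (N : nat) : (-(N%:R : R) < (k%:~R * N%:R : R) < (N%:R : R)) -> k = 0.
Proof.
have -> : k%:~R * N%:R = (k * N%:Z)%:~R :> R by rewrite intrM.
rewrite -[N%:R]/((N%:Z)%:~R) -intrN !ltr_int => /andP[h1 h2].
nia.
Qed.

Ltac crush := simpl in *; repeat match goal with
 | H : is_true true -> _ |- _ => specialize (H isT)
 | H : is_true false -> _ |- _ => clear H
 | H : _ /\ _ |- _ => destruct H
 | H : is_true (_ && _) |- _ => move/andP: H => [? ?]
 end; try lra.

Lemma kinds_eq (o1 o2 k1 h1 k2 h2 : bool) (r1 r2 : R) : o2 = ~~ o1 ->
  ~~ (k1 && h1) -> ~~ (k2 && h2) -> r1 = r2 ->
  (~~ k1 && ~~ h1 -> r1 = 2) ->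
  (k1 -> (o1 -> 2 < r1 < 3) /\ (~~ o1 -> 1 < r1 < 2)) ->
  (h1 -> (o2 -> 2 < r1 < 3) /\ (~~ o2 -> 1 < r1 < 2)) ->
  (~~ k2 && ~~ h2 -> r2 = 2) ->
  (k2 -> (o1 -> 2 < r2 < 3) /\ (~~ o1 -> 1 < r2 < 2)) ->
  (h2 -> (o2 -> 2 < r2 < 3) /\ (~~ o2 -> 1 < r2 < 2)) ->
  k1 = k2 /\ h1 = h2.
Proof.
move=> -> H1 H2 e; subst r2; move: H1 H2.
by case: o1; case: k1; case: h1; case: k2; case: h2 => //= *; crush.
Qed.

Lemma rad_contra (r q : R) : ((1 < r < 2) \/ (2 < r < 3)) ->
  (q = 1 \/ q = 2 \/ q = 3) -> r = q -> False.
Proof. by case=> /andP[a b] [->|[->|->]] e; lra. Qed.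

Section Main.
Variable m : nat.
Local Notation n := m.+1.
Variables (V : finType) (adj : rel V) (f : 'I_n -> V) (g : V -> 'I_n).
Hypotheses (fK : cancel f g) (gK : cancel g f) (hn : (3 <= n)%N) (hev : ~~ odd n)
  (hadj : forall i j, adj (f i) (f j) = cycle_adj i j).

Definition vert (x : V + V) : V := match x with inl v => v | inr v => v end.
Definition kind (x : V + V) : bool := if x is inr _ then true else false.
Definition ix (x : V + V) : nat := g (vert x).
Definition vx (b : bool) (i : nat) : V + V :=
  if b then inr (f (inord i)) else inl (f (inord i)).
Definition rad (x : V + V) : R := if kind x then (if odd (ix x) then 3 else 1) else 2.
Definition dlt (x y : V + V) : R :=
  if ix x == ix y then 0 else if ix y == ((ix x).+1 %% n)%N then 1 else -1.
Definition ang : R := pi *+ 2 / n%:R.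
Definition Rr x y (t : R) := rad x + t * (rad y - rad x).
Definition X x y (t : R) := (ix x)%:R + t * dlt x y.
Definition pos x := P (rad x) (ang * (ix x)%:R).
Definition arc x y t := P (Rr x y t) (ang * X x y t).
Definition cyc (i j : nat) := (j == (i.+1 %% n)%N) || (i == (j.+1 %% n)%N).

Lemma ix_lt x : (ix x < n)%N.
Proof. exact: ltn_ord. Qed.

Lemma vxE x : x = vx (kind x) (ix x).
Proof. by case: x => v; rewrite /vx /ix /= inord_val gK. Qed.

Lemma adjE u v : adj u v = cycle_adj (g u) (g v).
Proof. by rewrite -{1}(gK u) -{1}(gK v) hadj. Qed.

Lemma ix_inj x y : ix x = ix y -> vert x = vert y.
Proof. by move=> h; rewrite -(gK (vert x)) -(gK (vert y)); congr f; apply: val_inj. Qed.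

Lemma edge_info x y : great_shadow adj x y ->
  [/\ ~~ (kind x && kind y), (ix x = ix y -> kind x != kind y)
    & (ix x != ix y -> cyc (ix x) (ix y))].
Proof.
rewrite /cyc /ix; case: x => u; case: y => v //=; rewrite ?adjE /cycle_adj.
- move=> /andP[ne h]; split => // e.
  by move: ne; rewrite -(inj_eq val_inj) /= e eqxx.
- case/orP => [/eqP -> | /andP[_ h]]; split => //; first by rewrite eqxx.
  by move=> _; rewrite orbC.
- by case/orP => [/eqP -> | /andP[_ h]]; split => //; rewrite eqxx.
Qed.

Ltac solve_r := repeat (match goal with
  | |- _ /\ _ => split
  | |- _ \/ _ => first [left; solve_r; done | right]
  | |- _ -> _ => move=> ?
  | |- is_true (_ && _) => apply/andP; split end); try done; try lra.

Lemma Rr_facts x y t : 0 < t < 1 -> ~~ (kind x && kind y) ->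
 [/\ (~~ kind x && ~~ kind y -> Rr x y t = 2),
     (kind x -> (odd (ix x) -> 2 < Rr x y t < 3) /\ (~~ odd (ix x) -> 1 < Rr x y t < 2)) &
     (kind y -> (odd (ix y) -> 2 < Rr x y t < 3) /\ (~~ odd (ix y) -> 1 < Rr x y t < 2))].
Proof.
rewrite /Rr /rad => /andP[t0 t1].
by case: (kind x); case: (kind y); case: (odd (ix x)); case: (odd (ix y)) => //= _;
  split; solve_r.
Qed.

Lemma Rr_spoke x y t : 0 < t < 1 -> kind x != kind y ->
  (1 < Rr x y t < 2) \/ (2 < Rr x y t < 3).
Proof.
rewrite /Rr /rad => /andP[t0 t1].
by case: (kind x); case: (kind y); case: (odd (ix x)); case: (odd (ix y)) => //= _;
  solve_r.
Qed.

Lemma Rr_pos x y t : 0 <= t <= 1 -> 0 < Rr x y t.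
Proof.
rewrite /Rr /rad => /andP[t0 t1].
by case: (kind x); case: (kind y); case: (odd (ix x)); case: (odd (ix y)) => //=; nra.
Qed.

Lemma rad_vals x : rad x = 1 \/ rad x = 2 \/ rad x = 3.
Proof. by rewrite /rad; case: (kind x); case: (odd (ix x)); auto. Qed.

Lemma rad_pos x : 0 < rad x.
Proof. by case: (rad_vals x) => [->|[->|->]]; lra. Qed.

Lemma spoke_set x y : ix x = ix y -> kind x != kind y ->
  [set x; y] = [set vx false (ix x); vx true (ix x)].
Proof.
move=> e; move: (vxE x) (vxE y); rewrite -e.
move: (ix x) (kind x) (kind y) => i kx ky -> ->.
by case: kx; case: ky => //= _; rewrite finset.setUC.
Qed.

Lemma odd_succ_mod l : (l < n)%N -> odd (l.+1 %% n)%N = ~~ odd l.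
Proof.
move=> hl; have [h|h] : (l.+1 < n \/ l.+1 = n)%N by lia.
- by rewrite modn_small.
- rewrite h modnn /=.
  by move: hev; rewrite -h /= negbK => ->.
Qed.

Lemma sig x y : great_shadow adj x y -> ix x != ix y ->
 exists (l : nat) (klo khi : bool) (p : int),
  [/\ (l < n)%N, ~~ (klo && khi),
      [set x; y] = [set vx klo l; vx khi (l.+1 %% n)%N],
      (p = l%:Z \/ p = l%:Z - n%:Z) &
   forall t, 0 < t < 1 -> [/\ p%:~R < X x y t < p%:~R + 1,
        (~~ klo && ~~ khi -> Rr x y t = 2),
        (klo -> (odd l -> 2 < Rr x y t < 3) /\ (~~ odd l -> 1 < Rr x y t < 2)) &
        (khi -> (odd (l.+1 %% n)%N -> 2 < Rr x y t < 3) /\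
                (~~ odd (l.+1 %% n)%N -> 1 < Rr x y t < 2))]].
Proof.
move=> E ne; have [nk _ /(_ ne) cy] := edge_info x y E.
have hx := ix_lt x; have hy := ix_lt y.
rewrite /cyc in cy.
case hA: (ix y == (ix x).+1 %% n)%N.
- exists (ix x), (kind x), (kind y), (ix x)%:Z; split => //.
  + by rewrite -(eqP hA) {1}(vxE x) {1}(vxE y).
  + by left.
  move=> t ht; have [r1 r2 r3] := Rr_facts x y t ht nk.
  split => //; last by rewrite -(eqP hA).
  rewrite /X /dlt (negbTE ne) hA.
  by move: ht => /andP[t0 t1]; apply/andP; split; rewrite -[(Posz _)%:~R]/(_%:R); lra.
- rewrite hA /= in cy.
  have dm : dlt x y = -1 by rewrite /dlt (negbTE ne) hA.
  exists (ix y), (kind y), (kind x), (if ((ix y).+1 < n)%N then (ix y)%:Z else (ix y)%:Z - n%:Z).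
  split => //.
  + by rewrite andbC.
  + by rewrite -(eqP cy) finset.setUC {1}(vxE x) {1}(vxE y).
  + by case: ifP => _; [left|right].
  move=> t ht; have [r1 r2 r3] := Rr_facts x y t ht nk.
  split => //; first last.
  + by rewrite -(eqP cy).
  + by move=> h; apply: r1; rewrite andbC.
  rewrite /X dm.
  move: ht => /andP[t0 t1].
  case: ifP => hl.
  * rewrite modn_small // in cy.
    rewrite (eqP cy) -[(Posz _)%:~R]/(_%:R) -natr1.
    apply/andP; split; lra.
  * have ey : (ix y).+1 = n by apply/eqP; rewrite eqn_leq hy leqNgt hl.
    rewrite ey modnn in cy.
    rewrite (eqP cy) intrB -[(Posz (ix y))%:~R]/((ix y)%:R) -[(Posz n)%:~R]/(n%:R) -ey -natr1.
    apply/andP; split; lra.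
Qed.

Lemma n_gt0 : (0 : R) < n%:R.
Proof. by rewrite ltr0n. Qed.

Lemma ang_n : ang * n%:R = pi *+ 2.
Proof. by rewrite /ang divfK // gt_eqF // n_gt0. Qed.

Lemma ang_neq0 : ang != 0.
Proof.
apply/eqP => a0; have := ang_n; rewrite a0 mul0r mulr2n => h.
by have := @pi_gt0 R; lra.
Qed.

Lemma coord (R1 R2 X1 X2 : R) : 0 < R1 -> 0 < R2 ->
  P R1 (ang * X1) = P R2 (ang * X2) ->
  R1 = R2 /\ exists k : int, X1 - X2 = k%:~R * n%:R.
Proof.
move=> r1 r2 /(P_inj _ _ _ _ r1 r2) [-> [k hk]]; split => //; exists k.
apply: (mulfI ang_neq0).
by rewrite mulrBr hk -ang_n mulrCA.
Qed.

Lemma natz (i : nat) : ((i%:Z)%:~R : R) = i%:R.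
Proof. by []. Qed.

Lemma end1 x y : great_shadow adj x y ->
  exists w : int, (ix x)%:R + dlt x y = (ix y)%:R + w%:~R * n%:R.
Proof.
move=> E; have [nk _ cy] := edge_info x y E.
have hx := ix_lt x; have hy := ix_lt y.
rewrite /dlt; case: eqP => [e|/eqP ne].
  by exists 0; rewrite e mul0r !addr0.
move: (cy ne); rewrite /cyc; case: eqP => [hA _|hA /= /eqP cy'].
  have [h|h] : ((ix x).+1 < n \/ (ix x).+1 = n)%N by lia.
    exists 0; rewrite hA modn_small // mul0r addr0 -natr1 //.
  exists 1; rewrite hA h modnn mul1r add0r -h -natr1 //.
have [h|h] : ((ix y).+1 < n \/ (ix y).+1 = n)%N by lia.
  exists 0; rewrite cy' modn_small // mul0r addr0 -natr1; ring.
exists (-1); rewrite cy' h modnn -h -natr1 /=.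
rewrite -[(-1 : int)%:~R]/((-1 : R)); ring.
Qed.

Lemma nat_eq_mod (i j : nat) (k : int) : (i < n)%N -> (j < n)%N ->
  (i%:R - j%:R : R) = k%:~R * n%:R -> i = j.
Proof.
move=> hi hj e.
have e' : (i%:Z - j%:Z) = k * n%:Z.
  apply: (@intr_inj R); by rewrite intrB intrM !natz.
have : i%:Z = j%:Z by apply: (@int_same _ _ (k) n%:Z) => //; apply/andP; split; lia.
by case.
Qed.

Lemma int_same2 (l1 l2 : nat) (p1 p2 k : int) : (l1 < n)%N -> (l2 < n)%N ->
  (p1 = l1%:Z \/ p1 = l1%:Z - n%:Z) -> (p2 = l2%:Z \/ p2 = l2%:Z - n%:Z) ->
  p1 = p2 + k * n%:Z -> l1 = l2.
Proof.
move=> h1 h2 [->|->] [->|->] e.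
- have : l1%:Z = l2%:Z by apply: (@int_same _ _ (k) n%:Z); first [apply/andP; split; lia | lia].
  by case.
- have : l1%:Z = l2%:Z by apply: (@int_same _ _ (k - 1) n%:Z); first [apply/andP; split; lia | lia].
  by case.
- have : l1%:Z = l2%:Z by apply: (@int_same _ _ (k + 1) n%:Z); first [apply/andP; split; lia | lia].
  by case.
- have : l1%:Z = l2%:Z by apply: (@int_same _ _ (k) n%:Z); first [apply/andP; split; lia | lia].
  by case.
Qed.

Lemma oc (t : R) : 0 < t < 1 -> 0 <= t <= 1.
Proof. by move=> /andP[a b]; apply/andP; split; lra. Qed.

Lemma n_ge3 : (3 : R) <= n%:R.
Proof. by rewrite -[3]/(3%:R) ler_nat. Qed.

Lemma dlt0 x y : ix x = ix y -> dlt x y = 0.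
Proof. by rewrite /dlt => ->; rewrite eqxx. Qed.

Lemma dlt1 x y : ix x != ix y -> dlt x y = 1 \/ dlt x y = -1.
Proof. by rewrite /dlt => /negbTE ->; case: ifP; auto. Qed.

Lemma rad_diff x y : kind x != kind y -> rad y - rad x != 0.
Proof.
rewrite /rad; case: (kind x); case: (kind y) => //= _;
  case: (odd _) => //; apply/eqP; lra.
Qed.

Lemma planar_main : planar (great_shadow adj).
Proof.
exists pos, arc; split.
  move=> x y /(coord _ _ _ _ (rad_pos x) (rad_pos y)) [er [k hk]].
  have e : ix x = ix y by apply: (nat_eq_mod _ _ _ (ix_lt x) (ix_lt y) hk).
  have ek : kind x = kind y.
    move: er; rewrite /rad; case: (kind x); case: (kind y) => //=;
      case: (odd _) => //; try case: (odd _) => //; lra.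
  by rewrite (vxE x) (vxE y) e ek.
move=> u v E.
have [nk ksp cy] := edge_info u v E.
split.
- apply: continuous_subspaceT.
  apply: P_cont; first exact: affine_cont.
  exact: affine_cont2.
- move=> s t hs ht /(coord _ _ _ _ (Rr_pos u v s hs) (Rr_pos u v t ht)) [eR [k hk]].
  case: (boolP (ix u == ix v)) => [/eqP e|ne].
    have := rad_diff _ _ (ksp e) => hd.
    move: eR; rewrite /Rr => eR.
    have : (s - t) * (rad v - rad u) = 0 by rewrite mulrBl; lra.
    move/eqP; rewrite mulf_eq0 (negbTE hd) orbF subr_eq0 => /eqP //.
  move: hk; rewrite /X => hk.
  have hk0 : k = 0.
    apply: (@kn_small k n); rewrite -hk.
    move: hs ht => /andP[s0 s1] /andP[t0 t1]; have := n_ge3.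
    by case: (dlt1 _ _ ne) => ->; move=> h3; apply/andP; split; lra.
  move: hk; rewrite hk0 mul0r.
  by case: (dlt1 _ _ ne) => -> h; lra.
- split.
    by rewrite /arc /Rr /X /pos !mul0r !addr0.
  have [w hw] := end1 u v E.
  rewrite /arc /Rr /X /pos !mul1r hw addrC subrK.
  have -> : ang * ((ix v)%:R + w%:~R * n%:R) = ang * (ix v)%:R + w%:~R * (pi *+ 2).
    by rewrite -ang_n; ring.
  by rewrite P_per.
- move=> t w ht /(coord _ _ _ _ (Rr_pos u v t (oc _ ht)) (rad_pos w)) [eR [k hk]].
  case: (boolP (ix u == ix v)) => [/eqP e|ne].
    exact: (rad_contra _ _ (Rr_spoke u v t ht (ksp e)) (rad_vals w) eR).
  have [l [klo [khi [p [hl hkk hset hp hX]]]]] := sig u v E ne.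
  have [hX1 _ _ _] := hX t ht.
  apply: (@no_int_inside p ((ix w)%:Z + k * n%:Z)).
  rewrite intrD intrM !natz.
  have -> : (ix w)%:R + k%:~R * n%:R = X u v t by lra.
  exact: hX1.
- move=> x y E2 hne s t hs ht.
  move=> /(coord _ _ _ _ (Rr_pos u v s (oc _ hs)) (Rr_pos x y t (oc _ ht))) [eR [k hk]].
  have [nk2 ksp2 cy2] := edge_info x y E2.
  case: (boolP (ix u == ix v)) => [/eqP e|ne]; case: (boolP (ix x == ix y)) => [/eqP e2|ne2].
  + move: hk; rewrite /X !dlt0 // !mulr0 !addr0 => hk.
    have e3 := nat_eq_mod _ _ _ (ix_lt u) (ix_lt x) hk.
    move: hne; rewrite (spoke_set u v e (ksp e)) (spoke_set x y e2 (ksp2 e2)) e3.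
    by rewrite eqxx.
  + have [l [klo [khi [p [hl hkk hset hp hX]]]]] := sig x y E2 ne2.
    have [hX1 _ _ _] := hX t ht.
    move: hk; rewrite {1}/X dlt0 // mulr0 addr0 => hk.
    apply: (@no_int_inside p ((ix u)%:Z - k * n%:Z)).
    rewrite intrB intrM !natz.
    have -> : (ix u)%:R - k%:~R * n%:R = X x y t by lra.
    exact: hX1.
  + have [l [klo [khi [p [hl hkk hset hp hX]]]]] := sig u v E ne.
    have [hX1 _ _ _] := hX s hs.
    move: hk; rewrite [X x y t]/X dlt0 // mulr0 addr0 => hk.
    apply: (@no_int_inside p ((ix x)%:Z + k * n%:Z)).
    rewrite intrD intrM !natz.
    have -> : (ix x)%:R + k%:~R * n%:R = X u v s by lra.
    exact: hX1.
  + have [l [klo [khi [p [hl hkk hset hp hX]]]]] := sig u v E ne.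
    have [l' [klo' [khi' [p' [hl' hkk' hset' hp' hX']]]]] := sig x y E2 ne2.
    have [hX1 r1 r2 r3] := hX s hs.
    have [hX1' r1' r2' r3'] := hX' t ht.
    have ep : p = p' + k * n%:Z.
      apply: (@unit_int p (p' + k * n%:Z) (X u v s)) => //.
      rewrite intrD intrM natz.
      have -> : X u v s = X x y t + k%:~R * n%:R by lra.
      by move: hX1' => /andP[a b]; apply/andP; split; lra.
    have el := int_same2 _ _ _ _ _ hl hl' hp hp' ep.
    subst l'.
    have [ek eh] := kinds_eq _ _ _ _ _ _ _ _ (odd_succ_mod _ hl) hkk hkk' eR r1 r2 r3 r1' r2' r3'.
    by move: hne; rewrite hset hset' ek eh eqxx.
Qed.

End Main.

Theorem lemma6p1 (V : finType) (adj : rel V) (n : nat) :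
  simple_graph adj -> is_cycle_of_length adj n -> ~~ odd n ->
  planar (great_shadow adj).
Proof.
move=> _ [h3 [f [fb hf]]] hev.
case: n f fb hf h3 hev => [|m] f fb hf h3 hev; first by [].
case: fb => g fK gK.
eapply planar_main; eassumption.
Qed.
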